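(* Let $k\ge1$. If $k$ is even, the evaluation problem of $\Sigma_k$-DNF (i.e. the class of $\tau$-structures encoding true $\Sigma_k$-DNF formulas) is definable by a $\Sigma^1_{k+1}\text{-}\mathrm{KROM}^r(\tau)$ sentence; if $k$ is odd, the evaluation problem of $\Pi_k$-DNF is definable by a $\Pi^1_{k+1}\text{-}\mathrm{KROM}^r(\tau)$ sentence. Here $\tau=\{\mathrm{Clause},\mathrm{Var}_1,\dots,\mathrm{Var}_k,\mathrm{Pos},\mathrm{Neg}\}$ and formulas are encoded as described in the context.
   Context: A $\Sigma_k$-DNF (resp. $\Pi_k$-DNF) formula is a quantified Boolean formula $Q_1\bar{x}_1Q_2\bar{x}_2\cdots Q_k\bar{x}_k\,\phi$ with alternating quantifier blocks, $Q_1=\exists$ (resp. $Q_1=\forall$), and quantifier-free matrix $\phi$ in disjunctive normal form (a disjunction of ''clauses'', each a conjunction of literals). Such a formula is encoded by a finite structure over $\tau=\{\mathrm{Clause},\mathrm{Var}_1,\dots,\mathrm{Var}_k,\mathrm{Pos},\mathrm{Neg}\}$ ($\mathrm{Clause},\mathrm{Var}_h$ unary, $\mathrm{Pos},\mathrm{Neg}$ binary) whose domain consists of the clauses and variables, where $\mathrm{Clause}\,i$ holds iff $i$ is a clause, $\mathrm{Var}_h\,j$ iff $j$ is a variable of block $\bar{x}_h$, and $\mathrm{Pos}\,ij$ (resp. $\mathrm{Neg}\,ij$) iff variable $j$ occurs positively (resp. negatively) in clause $i$. For a vocabulary $\tau$, an SO-KROM$^r(\tau)$ formula is a second-order formula $Q_1R_1\cdots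 Q_mR_m\forall\bar{x}(C_1\wedge\cdots\wedge C_n)$, where each $Q_i\in\{\forall,\exists\}$, $R_i$ are second-order relation variables, and each clause $C_j$ is a disjunction $\beta_1\vee\cdots\vee\beta_q\vee H_1\vee H_2$ in which each $\beta_s$ is an atomic or negated atomic $\tau$-formula (equality included), and each $H_t$ is one of $R_i\bar{z}$, $\neg R_i\bar{z}$, $\exists z_1\cdots\exists z_{r}R_i z_1\dots z_r$ ($r$ the arity of $R_i$), or $\bot$. $\Sigma^1_k\text{-}\mathrm{KROM}^r$ (resp. $\Pi^1_k\text{-}\mathrm{KROM}^r$) is the set of SO-KROM$^r$ formulas whose second-order prefix starts with an existential (resp. universal) quantifier and has exactly $k-1$ alternations between blocks of existential and universal quantifiers. *)

(* Defs.v *)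
From mathcomp Require Import all_boot.
Unset Printing Implicit Defensive.

(* Domain is 'I_(dsize A); Var_{h+1} is tVar A h for h : 'I_k.        *)
Record tau_struct (k : nat) := TauStruct {
  dsize : nat;
  tClause : 'I_dsize -> bool;
  tVar : 'I_k -> 'I_dsize -> bool;
  tPos : 'I_dsize -> 'I_dsize -> bool;
  tNeg : 'I_dsize -> 'I_dsize -> bool }.
Arguments dsize {k}. Arguments tClause {k}. Arguments tVar {k}.
Arguments tPos {k}. Arguments tNeg {k}.

Section Encoding.
Variables (k : nat) (A : tau_struct k).
Local Notation D := ('I_(dsize A)).

Definition is_var (x : D) : bool := [exists h, tVar A h x].

(* A encodes a quantified DNF formula with k blocks: the domain consists of
   the clauses and the variables (each element is exactly one of: a clause, a
   variable of block h for a unique h), and Pos/Neg relate clauses to variables. *)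
Definition encodes_qdnf : Prop :=
  (forall x : D, tClause A x + #|[pred h | tVar A h x]| = 1)%N /\
  (forall i j : D, tPos A i j -> tClause A i && is_var j) /\
  (forall i j : D, tNeg A i j -> tClause A i && is_var j).

Definition dnf_holds (a : D -> bool) : bool :=
  [exists c : D, tClause A c &&
     [forall x : D, (tPos A c x ==> a x) && (tNeg A c x ==> ~~ a x)]].

Fixpoint qeval (ex : bool) (hs : seq 'I_k) (a : D -> bool) : Prop :=
  match hs with
  | [::] => dnf_holds a
  | h :: hs' =>
      if ex then exists b : {ffun D -> bool},
                   qeval (~~ ex) hs' (fun x => if tVar A h x then b x else a x)
      else forall b : {ffun D -> bool},
                   qeval (~~ ex) hs' (fun x => if tVar A h x then b x else a x)
  end.

(* A encodes a true Sigma_k-DNF (ex = true) / Pi_k-DNF (ex = false) formula *)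
Definition true_qdnf (ex : bool) : Prop :=
  encodes_qdnf /\ qeval ex (enum 'I_k) (fun _ => false).

End Encoding.
Arguments true_qdnf {k}. Arguments encodes_qdnf {k}. Arguments qeval {k}.
Arguments dnf_holds {k}. Arguments is_var {k}.

(*   Q_1 R_1 ... Q_m R_m forall xbar (C_1 /\ ... /\ C_n)              *)
(* First-order variables are nats; the block forall xbar quantifies   *)
(* all first-order variables occurring in the matrix.                 *)
Inductive tatom (k : nat) :=
  | AClause of nat
  | AVar of 'I_k & nat
  | APos of nat & nat
  | ANeg of nat & nat
  | AEq of nat & nat.

(* literal beta: (true, at) = at, (false, at) = ~ at *)
Definition tlit (k : nat) := (bool * tatom k)%type.

(* the H_t disjuncts; SO variables are indices into the prefix *)
Inductive hlit :=
  | HPos of nat & seq nat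
  | HNeg of nat & seq nat
  | HEx of nat                   (* exists z_1..z_r, R_i z_1 .. z_r *)
  | HBot.

Record krom_clause (k : nat) := KClause {
  kbetas : seq (tlit k); kH1 : hlit; kH2 : hlit }.
Arguments kbetas {k}. Arguments kH1 {k}. Arguments kH2 {k}.

(* prefix: list of (is_existential, arity) for R_1, ..., R_m *)
Record krom_formula (k : nat) := KForm {
  kprefix : seq (bool * nat);
  kclauses : seq (krom_clause k) }.
Arguments kprefix {k}. Arguments kclauses {k}.

Definition so_arity (p : seq (bool * nat)) (i : nat) : nat := (nth (true, 0) p i).2.

Definition wf_hlit (p : seq (bool * nat)) (H : hlit) : bool :=
  match H with
  | HPos i zs | HNeg i zs => (i < size p) && (size zs == so_arity p i)
  | HEx i => i < size p
  | HBot => true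
  end.

Definition wf_krom {k : nat} (phi : krom_formula k) : bool :=
  all (fun C => wf_hlit (kprefix phi) (kH1 C) && wf_hlit (kprefix phi) (kH2 C))
      (kclauses phi).

Fixpoint alternations (qs : seq bool) : nat :=
  match qs with
  | q1 :: ((q2 :: _) as qs') => (q1 != q2) + alternations qs'
  | _ => 0
  end.

(* Sigma^1_j (ex = true) / Pi^1_j (ex = false): prefix starts with the given
   quantifier and has exactly j-1 alternations *)
Definition krom_class (ex : bool) (j : nat) {k : nat} (phi : krom_formula k) : bool :=
  [&& wf_krom phi, head (~~ ex) (map fst (kprefix phi)) == ex
    & alternations (map fst (kprefix phi)) == j.-1].

Section Semantics.
Variables (k : nat) (A : tau_struct k).
Local Notation D := ('I_(dsize A)).

Definition eval_tatom (s : nat -> D) (t : tatom k) : bool :=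
  match t with
  | AClause x => tClause A (s x)
  | AVar h x => tVar A h (s x)
  | APos x y => tPos A (s x) (s y)
  | ANeg x y => tNeg A (s x) (s y)
  | AEq x y => s x == s y
  end.

Definition eval_tlit (s : nat -> D) (l : tlit k) : bool :=
  if l.1 then eval_tatom s l.2 else ~~ eval_tatom s l.2.

(* env i = interpretation of R_i, as a predicate on tuples (as sequences) *)
Definition eval_hlit (p : seq (bool * nat)) (env : seq (seq D -> bool))
    (s : nat -> D) (H : hlit) : bool :=
  match H with
  | HPos i zs => nth (fun _ => false) env i (map s zs)
  | HNeg i zs => ~~ nth (fun _ => false) env i (map s zs)
  | HEx i => [exists t : (so_arity p i).-tuple D, nth (fun _ => false) env i t]
  | HBot => false
  end.

Definition eval_clause p env s (C : krom_clause k) : bool :=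
  has (eval_tlit s) (kbetas C) || eval_hlit p env s (kH1 C) || eval_hlit p env s (kH2 C).

Definition eval_matrix p env (Cs : seq (krom_clause k)) : Prop :=
  forall s : nat -> D, all (eval_clause p env s) Cs.

Definition rel_of {a : nat} (R : {set a.-tuple D}) : seq D -> bool :=
  fun xs => [exists t : a.-tuple D, (t \in R) && (val t == xs)].

(* q is the remaining part of the prefix; env the interpretations so far *)
Fixpoint eval_prefix (p : seq (bool * nat)) (Cs : seq (krom_clause k))
    (q : seq (bool * nat)) (env : seq (seq D -> bool)) : Prop :=
  match q with
  | [::] => eval_matrix p env Cs
  | (ex, a) :: q' =>
      if ex then exists R : {set a.-tuple D}, eval_prefix p Cs q' (rcons env (rel_of R))
      else forall R : {set a.-tuple D}, eval_prefix p Cs q' (rcons env (rel_of R))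
  end.

Definition krom_sat (phi : krom_formula k) : Prop :=
  eval_prefix (kprefix phi) (kclauses phi) (kprefix phi) [::].

End Semantics.
Arguments krom_sat {k}.

Definition defines {k : nat} (phi : krom_formula k) (P : tau_struct k -> Prop) : Prop :=
  forall A : tau_struct k, (0 < dsize A)%N -> (krom_sat A phi <-> P A).

(* Main.v *)
Require Import Defs.
From mathcomp Require Import all_boot.

Section Form.
Variables (k : nat) (ex : bool).

Definition bpre (j n : nat) : seq (bool * nat) :=
  [seq (odd h (+) ex, 1) | h <- iota j n] ++ [:: (true, 1)].
Definition kp := bpre 0 k.

Definition cS0 : krom_clause k := KClause k [::] (HEx k) HBot.
Definition cS1 : krom_clause k := KClause k [:: (true, AClause k 0)] (HNeg k [:: 0]) HBot.
Definition cSP (h : 'I_k) : krom_clause k :=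
  KClause k [:: (false, APos k 0 1); (false, AVar k h 1)] (HNeg k [:: 0]) (HPos h [:: 1]).
Definition cSN (h : 'I_k) : krom_clause k :=
  KClause k [:: (false, ANeg k 0 1); (false, AVar k h 1)] (HNeg k [:: 0]) (HNeg h [:: 1]).
Definition cE1 : krom_clause k :=
  KClause k ((true, AClause k 0) :: [seq (true, AVar k h 0) | h <- enum 'I_k]) HBot HBot.
Definition cE2 (h : 'I_k) : krom_clause k :=
  KClause k [:: (false, AClause k 0); (false, AVar k h 0)] HBot HBot.
Definition cE3 (hh : 'I_k * 'I_k) : krom_clause k :=
  KClause k [:: (false, AVar k hh.1 0); (false, AVar k hh.2 0)] HBot HBot.
Definition cP1 : krom_clause k := KClause k [:: (false, APos k 0 1); (true, AClause k 0)] HBot HBot.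
Definition cP2 : krom_clause k :=
  KClause k ((false, APos k 0 1) :: [seq (true, AVar k h 1) | h <- enum 'I_k]) HBot HBot.
Definition cN1 : krom_clause k := KClause k [:: (false, ANeg k 0 1); (true, AClause k 0)] HBot HBot.
Definition cN2 : krom_clause k :=
  KClause k ((false, ANeg k 0 1) :: [seq (true, AVar k h 1) | h <- enum 'I_k]) HBot HBot.

Definition pairs : seq ('I_k * 'I_k) := [seq hh <- enum {: 'I_k * 'I_k} | hh.1 != hh.2].

Definition Cs : seq (krom_clause k) :=
  [:: cS0; cS1; cE1; cP1; cP2; cN1; cN2] ++ map cE2 (enum 'I_k) ++ map cE3 pairs
  ++ map cSP (enum 'I_k) ++ map cSN (enum 'I_k).

Definition phi : krom_formula k := KForm k kp Cs.

Lemma size_kp : size kp = k.+1.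
Proof. by rewrite /kp /bpre size_cat size_map size_iota addn1. Qed.

Lemma arity_kp i : i <= k -> so_arity kp i = 1.
Proof.
move=> hi; rewrite /so_arity /kp /bpre nth_cat size_map size_iota.
case: ltnP => h.
  by rewrite (nth_map 0) ?size_iota.
by have -> : i - k = 0 by apply/eqP; rewrite subn_eq0.
Qed.

Lemma wf_phi : wf_krom phi.
Proof.
rewrite /wf_krom /=; rewrite size_kp arity_kp //= !ltnSn /=.
rewrite !all_cat !all_map; apply/and4P; split; apply/allP => h _ /=;
  rewrite ?size_kp ?ltnSn ?arity_kp ?ltnS ?ltn_ord ?(ltnW (ltn_ord _)) //.
Qed.

Lemma alt_bpre j n : odd (j + n) (+) ex -> alternations (map fst (bpre j n)) = n.
Proof.
elim: n j => [|n IH] j H; first by [].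
have E : map fst (bpre j n.+1) = (odd j (+) ex) :: map fst (bpre j.+1 n) by [].
rewrite E; have IH' := IH j.+1; rewrite addSnnS in IH'; have {}IH' := IH' H.
case: n IH IH' H E => [|n] _ IH' H _.
  by move: H; rewrite addn1 /= addNb; case: (odd j (+) ex).
have E2 : map fst (bpre j.+1 n.+1) = (odd j.+1 (+) ex) :: map fst (bpre j.+2 n) by [].
have altS (a b : bool) t : alternations [:: a, b & t] = (a != b) + alternations (b :: t) by [].
rewrite E2 in IH'; rewrite altS IH' /= addNb; by case: (odd j (+) ex).
Qed.

End Form.

Lemma class_phi k ex : ex = ~~ odd k -> krom_class ex k.+1 (phi k ex).
Proof.
move=> hex; apply/and3P; split.
- exact: wf_phi.
- by rewrite /= /kp /bpre; case: k hex => [|k] //= ->.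
- by rewrite /= alt_bpre // hex add0n addbN addbb.
Qed.

Section Sem.
Variables (k : nat) (ex : bool) (A : tau_struct k).
Local Notation D := ('I_(dsize A)).

Lemma has_enum (T : finType) (P : pred T) : has P (enum T) = [exists x, P x].
Proof.
apply/hasP/existsP => [[x _ Px]|[x Px]]; first by exists x.
by exists x; rewrite ?mem_enum.
Qed.

Lemma has_enumF (T : finType) (P : pred T) : has P (Finite.enum T) = [exists x, P x].
Proof. by rewrite -enumT has_enum. Qed.

Lemma ex1 (f : seq D -> bool) : [exists t : 1.-tuple D, f t] = [exists c, f [:: c]].
Proof.
apply/existsP/existsP => [[[[|c [|]]] //= _ H]|[c H]]; first by exists c.
by exists [tuple c].
Qed.

Lemma relb (b : D -> bool) x : rel_of k A [set t : 1.-tuple D | b (thead t)] [:: x] = b x.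
Proof.
apply/existsP/idP => [[[[|c [|]]] //= sz]|H].
  by rewrite inE /thead (tnth_nth x) /= => /andP[H /eqP[<-]].
by exists [tuple x]; rewrite inE /thead (tnth_nth x) /= H andTb.
Qed.

Definition FOa (x : D) : bool :=
  [&& tClause A x || is_var A x, [forall h, ~~ (tClause A x && tVar A h x)] &
      [forall h, forall h', (h != h') ==> ~~ (tVar A h x && tVar A h' x)]].
Definition FOb (i j : D) : bool :=
  (tPos A i j ==> tClause A i && is_var A j) && (tNeg A i j ==> tClause A i && is_var A j).

Lemma all_Cs (P : pred (krom_clause k)) : all P (Cs k) <->
  [/\ [/\ P (cS0 k), P (cS1 k), P (cE1 k), P (cP1 k) & P (cP2 k)],
       [/\ P (cN1 k), P (cN2 k) & forall h, P (cE2 k h)],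
      forall h h', h != h' -> P (cE3 k (h, h')) & forall h, P (cSP k h) && P (cSN k h)].
Proof.
rewrite /Cs /= !all_cat !all_map; split.
  case/and5P => -> -> -> -> /and4P[-> -> -> /and4P[/allP a1 /allP a2 /allP a3 /allP a4]].
  split=> //.
  - by split=> // h; apply: a1; rewrite -enumT mem_enum.
  - by move=> h h' hh; apply: (a2 (h, h')); rewrite /pairs mem_filter mem_enum hh.
  - by move=> h; apply/andP; split; [apply: a3|apply: a4]; rewrite -enumT mem_enum.
case=> [[-> -> -> -> ->] [-> -> a1] a2 a3] /=.
apply/and4P; split.
- by apply/allP => h _ /=.
- apply/allP => -[h h'] /=; rewrite /pairs mem_filter /= => /andP[hh _]; exact: a2.
- by apply/allP => h _ /=; case/andP: (a3 h).
- by apply/allP => h _ /=; case/andP: (a3 h).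
Qed.
Lemma mat_to (d0 : D) env : eval_matrix k A (kp k ex) env (Cs k) ->
  (forall x, FOa x) /\ (forall i j, FOb i j) /\
  (exists c, nth (fun _ => false) env k [:: c]) /\
  (forall c, nth (fun _ => false) env k [:: c] -> tClause A c /\
     forall x (h : 'I_k), tVar A h x ->
       (tPos A c x -> nth (fun _ => false) env h [:: x]) /\
       (tNeg A c x -> ~~ nth (fun _ => false) env h [:: x])).
Proof.
move=> M.
have Hc s := proj1 (all_Cs _) (M s).
split.
  move=> x; pose s := fun _ : nat => x.
  have [[_ _ c2 _ _] [_ _ c4] c5 _] := Hc s.
  apply/and3P; split.
  - by move: c2; rewrite /eval_clause [has _ (_ :: _)]/= has_map has_enum /= !orbF.
  - apply/forallP => h; move: (c4 h); by rewrite /eval_clause /= !orbF negb_and.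
  - apply/forallP => h; apply/forallP => h'; apply/implyP => hh; move: (c5 h h' hh).
    by rewrite /eval_clause /= !orbF negb_and.
split.
  move=> i j; pose s := fun n : nat => if n is 0 then i else j.
  have [[_ _ _ c3 c4] [c5 c6 _] _ _] := Hc s.
  move: c3 c4 c5 c6; rewrite /eval_clause /= !orbF !has_map !has_enumF /eval_tlit /preim /=.
  move=> c3 c4 c5 c6; rewrite /FOb /is_var; apply/andP; split; apply/implyP => hp.
    by move: c3 c4; rewrite hp /= => -> ->.
  by move: c5 c6; rewrite hp /= => -> ->.
split.
  have [[c0 _ _ _ _] _ _ _] := Hc (fun _ => d0).
  by move: c0; rewrite /eval_clause /= !orbF arity_kp // ex1 => /existsP[c hc]; exists c.
move=> c hc; split.
  have [[_ c1 _ _ _] _ _ _] := Hc (fun _ => c).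
  by move: c1; rewrite /eval_clause /= /eval_tlit /= hc /= !orbF.
move=> x h hv; pose s n := if n is 0 then c else x.
have [_ _ _ c6] := Hc s; case/andP: (c6 h).
rewrite /eval_clause /= /eval_tlit /= hc hv /= !orbF => c7 c8; split => hp.
  by move: c7; rewrite hp.
by move: c8; rewrite hp.
Qed.

Lemma mat_from env :
  (forall x, FOa x) -> (forall i j, FOb i j) ->
  (exists c, nth (fun _ => false) env k [:: c]) ->
  (forall c, nth (fun _ => false) env k [:: c] -> tClause A c /\
     forall x (h : 'I_k), tVar A h x ->
       (tPos A c x -> nth (fun _ => false) env h [:: x]) /\
       (tNeg A c x -> ~~ nth (fun _ => false) env h [:: x])) ->
  eval_matrix k A (kp k ex) env (Cs k).
Proof.
move=> FA FB [c0 Hc0] HS s; apply/all_Cs.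
have /and3P[e1 /forallP e2 /forallP e3] := FA (s 0).
have /andP[/implyP p /implyP n] := FB (s 0) (s 1).
split; [split|split| |].
- by rewrite /eval_clause /= orbF arity_kp // ex1; apply/existsP; exists c0.
- rewrite /eval_clause /= /eval_tlit /= orbF.
  by case hS: (nth _ env k [:: s 0]); rewrite ?orbT // (proj1 (HS _ hS)).
- by rewrite /eval_clause /= !orbF has_map ?has_enum ?has_enumF /eval_tlit /preim /=.
- rewrite /eval_clause /= /eval_tlit /= !orbF.
  by case hp: (tPos A (s 0) (s 1)) => //=; case/andP: (p hp).
- rewrite /eval_clause /= !orbF has_map ?has_enum ?has_enumF /eval_tlit /preim /=.
  by case hp: (tPos A (s 0) (s 1)) => //=; case/andP: (p hp).
- rewrite /eval_clause /= /eval_tlit /= !orbF.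
  by case hp: (tNeg A (s 0) (s 1)) => //=; case/andP: (n hp).
- rewrite /eval_clause /= !orbF has_map ?has_enum ?has_enumF /eval_tlit /preim /=.
  by case hp: (tNeg A (s 0) (s 1)) => //=; case/andP: (n hp).
- by move=> h; rewrite /eval_clause /= /eval_tlit /= !orbF -negb_and.
- move=> h h' hh; rewrite /eval_clause /= /eval_tlit /= !orbF -negb_and.
  by move/forallP: (e3 h) => /(_ h') /implyP; apply.
- move=> h; rewrite /eval_clause /= /eval_tlit /=.
  case hS: (nth _ env k [:: s 0]); rewrite ?orbT ?andbT //=.
  have [_ Hx] := HS _ hS.
  case hv: (tVar A h (s 1)); rewrite ?orbT ?andbT //=.
  have [a b] := Hx _ _ hv.
  case hp: (tPos A (s 0) (s 1)); case hn: (tNeg A (s 0) (s 1)) => //=;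
    rewrite ?andbT ?orbF; try by [apply: a | apply: b | move: (b hn); rewrite (a hp)].
Qed.

Lemma card_FO x : (tClause A x + #|[pred h | tVar A h x]| = 1)%N <-> FOa x.
Proof.
rewrite /FOa; split.
  case hc: (tClause A x) => /= E.
    have c0 : #|[pred h | tVar A h x]| = 0 by case: E.
    have nv h : tVar A h x = false by move: (card0_eq c0 h); rewrite !inE.
    apply/andP; split; first by apply/forallP => h; rewrite nv.
    apply/forallP => h; apply/'forall_implyP => h' _; by rewrite nv.
  have E1 : #|[pred h | tVar A h x]| = 1 := E.
  have /card1P[h0 Hh0] := introT eqP E1.
  have vv h : tVar A h x = (h == h0) by move: (Hh0 h); rewrite !inE.
  apply/and3P; split.
  - by apply/existsP; exists h0; rewrite vv.
  - by apply/forallP.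
  - apply/forallP => h; apply/'forall_implyP => h' hh.
    by rewrite !vv; apply/negP => /andP[/eqP e1 /eqP e2]; move: hh; rewrite e1 e2 eqxx.
case/and3P => e1 /forallP e2 /forallP e3.
case hc: (tClause A x) e1 e2 => /= e1 e2.
  have -> : #|[pred h | tVar A h x]| = 0.
    by apply: eq_card0 => h; rewrite !inE; move: (e2 h) => /= /negbTE.
  by [].
case/existsP: e1 => h0 Hh0.
have -> : #|[pred h | tVar A h x]| = 1; last by [].
apply: (@eq_card1 _ h0) => h; rewrite !inE.
case: (eqVneq h h0) => [->|hh] //=.
move/'forall_implyP: (e3 h) => /(_ h0 hh).
by rewrite Hh0 andbT => /negbTE.
Qed.

Lemma enc_FO : encodes_qdnf A <-> (forall x, FOa x) /\ (forall i j, FOb i j).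
Proof.
split.
  case=> E [P N]; split; first by move=> x; apply/card_FO.
  by move=> i j; rewrite /FOb; apply/andP; split; apply/implyP; [apply: P | apply: N].
case=> FA FB; split; first by move=> x; apply/card_FO.
split=> i j h; have /andP[/implyP p /implyP n] := FB i j; [exact: p | exact: n].
Qed.

Definition inv j (env : seq (seq D -> bool)) (a : D -> bool) :=
  forall (h : 'I_k) x, h < j -> tVar A h x -> nth (fun _ => false) env h [:: x] = a x.

Lemma inv_step (FA : forall x, FOa x) j env a (o : 'I_k) (r : seq D -> bool) (bf : D -> bool) :
  (forall x, r [:: x] = bf x) -> size env = j -> inv j env a -> val o = j ->
  inv j.+1 (rcons env r) (fun x => if tVar A o x then bf x else a x).
Proof.
move=> hr hs hi ho h x hh hv; rewrite nth_rcons hs.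
case: (ltnP h j) => hl.
  rewrite -(hi h x hl hv).
  have ho' : h != o by apply/eqP => e; move: hl; rewrite e ho ltnn.
  have := FA x; case/and3P => _ _ /forallP /(_ h) /'forall_implyP /(_ o ho').
  by rewrite hv /= => /negbTE ->.
have hj : val h = j by apply/eqP; rewrite eqn_leq -ltnS hh hl.
have e : o = h by apply: val_inj; rewrite ho hj.
by rewrite hj eqxx e hv.
Qed.

Lemma drop_enum j (jk : j < k) : drop j (enum 'I_k) = Ordinal jk :: drop j.+1 (enum 'I_k).
Proof.
rewrite (drop_nth (Ordinal jk)) ?size_enum_ord //; congr (_ :: _).
by apply: val_inj; rewrite /= nth_enum_ord.
Qed.

Lemma main (enc : encodes_qdnf A) (d0 : D) : forall n j env a, j + n = k -> size env = j ->
  inv j env a ->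
  (eval_prefix k A (kp k ex) (Cs k) (bpre ex j n) env <->
   qeval A (odd j (+) ex) (drop j (enum 'I_k)) a).
Proof.
have [FA FB] := proj1 enc_FO enc.
elim=> [|n IH] j env a hjn hs hi.
  rewrite addn0 in hjn; rewrite hjn in hs hi *.
  rewrite drop_oversize ?size_enum_ord //=.
  have Hn r (h : 'I_k) : nth (fun _ => false) (rcons env r) h = nth (fun _ => false) env h.
    by rewrite nth_rcons hs ltn_ord.
  have Hk r : nth (fun _ => false) (rcons env r) k = r by rewrite nth_rcons hs ltnn eqxx.
  split.
    case=> R M; have [_ [_ [[c hc] HS]]] := mat_to d0 _ M.
    have [cc Hx] := HS c hc.
    apply/existsP; exists c; rewrite cc /=; apply/forallP => x.
    have /andP[/implyP p /implyP n] := FB c x.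
    apply/andP; split; apply/implyP => hp.
      have /andP[_ /existsP[h hv]] := p hp.
      have [a1 _] := Hx x h hv; rewrite Hn in a1.
      by rewrite -(hi h x (ltn_ord h) hv) a1.
    have /andP[_ /existsP[h hv]] := n hp.
    have [_ a2] := Hx x h hv; rewrite Hn in a2.
    by rewrite -(hi h x (ltn_ord h) hv); apply: a2.
  case/existsP => c /andP[cc /forallP Hc].
  exists [set t : 1.-tuple D | thead t == c].
  apply: mat_from => //.
    by exists c; rewrite Hk (relb (fun y => y == c)).
  move=> c'; rewrite Hk (relb (fun y => y == c)) => /eqP ->; split => // x h hv.
  rewrite Hn (hi h x (ltn_ord h) hv).
  by have /andP[/implyP p /implyP n] := Hc x.
have jk : j < k by rewrite -hjn addnS ltnS leq_addr.
rewrite (drop_enum _ jk).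
have -> : bpre ex j n.+1 = (odd j (+) ex, 1) :: bpre ex j.+1 n by [].
have IH' : forall env' a', size env' = j.+1 -> inv j.+1 env' a' ->
   (eval_prefix k A (kp k ex) (Cs k) (bpre ex j.+1 n) env' <->
    qeval A (~~ (odd j (+) ex)) (drop j.+1 (enum 'I_k)) a').
  by move=> env' a' h1 h2; rewrite -addNb; apply: IH; rewrite ?addSnnS.
have i1 (R : {set 1.-tuple D}) := @inv_step FA j env a (Ordinal jk) (rel_of k A R)
   [ffun x => rel_of k A R [:: x]] (fun x => esym (ffunE (fun y : D => rel_of k A R [:: y]) x)) hs hi erefl.
have i2 (bf : {ffun D -> bool}) := @inv_step FA j env a (Ordinal jk) _ bf (relb bf) hs hi erefl.
have sz r : size (rcons env r) = j.+1 by rewrite size_rcons hs.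
rewrite /=; case: (odd j (+) ex) IH' => IH'; split.
- by case=> R H; exists [ffun x => rel_of k A R [:: x]]; apply/(IH' _ _ (sz _) (i1 R)).
- by case=> bf H; exists [set t : 1.-tuple D | bf (thead t)]; apply/(IH' _ _ (sz _) (i2 bf)).
- by move=> H bf; apply/(IH' _ _ (sz _) (i2 bf)).
- by move=> H R; apply/(IH' _ _ (sz _) (i1 R)).
Qed.

End Sem.

Lemma prefix_matrix k (A : tau_struct k) p Cs q env :
  eval_prefix k A p Cs q env -> exists env', eval_matrix k A p env' Cs.
Proof.
elim: q env => [|[b a] q IH] env /=; first by exists env.
by case: b => [[R /IH]|H] //; exact: IH (H set0).
Qed.

Lemma defines_phi k ex : defines (phi k ex) (fun A => true_qdnf A ex).
Proof.
move=> A hA; pose d0 : 'I_(dsize A) := Ordinal hA.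
rewrite /krom_sat /=.
have inv0 : inv _ A 0 [::] (fun _ => false) by [].
split.
  move=> H.
  have enc : encodes_qdnf A.
    have [env' M] := prefix_matrix _ _ _ _ _ _ H.
    have [FA [FB _]] := mat_to _ _ _ d0 _ M.
    exact: (proj2 (enc_FO _ A)).
  split => //.
  by have := proj1 (main _ ex _ enc d0 _ _ _ _ (add0n k) (erefl : size [::] = 0) inv0) H; rewrite drop0.
case=> enc Q.
by apply: (proj2 (main _ ex _ enc d0 _ _ _ _ (add0n k) (erefl : size [::] = 0) inv0)); rewrite drop0.
Qed.

Theorem proposition3p1 (k : nat) (hk : (1 <= k)%N) :
  (~~ odd k ->
     exists phi : krom_formula k,
       krom_class true k.+1 phi /\ defines phi (fun A => true_qdnf A true)) /\
  (odd k ->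
     exists phi : krom_formula k,
       krom_class false k.+1 phi /\ defines phi (fun A => true_qdnf A false)).
Proof.
split=> hodd.
  exists (phi k true); split; last exact: defines_phi.
  by apply: class_phi; rewrite hodd.
exists (phi k false); split; last exact: defines_phi.
by apply: class_phi; rewrite hodd.
Qed.
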